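(* Let $m\ge1$ be a fixed integer. For the random key graph $G(n,X_n,Y_n)$ with $X_n\ge2$ for all large $n$ and edge probability satisfying $q_n\sim\frac{\ln n}{n}$, we have $$\mathbb{E}\Big[\exp\Big(-\frac{nq_n}{X_n}\Big|\bigcup_{i=1}^m S_i\Big|\Big)\Big]\le e^{-mnq_n}\,[1+o(1)]\quad(n\to\infty).$$
   Context: The random key graph $G(n,X_n,Y_n)$ (with $1\le X_n\le Y_n$ integers depending on $n$) has node set $\{v_1,\dots,v_n\}$; each node $v_i$ is independently assigned a set $S_i$ of $X_n$ distinct objects chosen uniformly at random among all $X_n$-element subsets of a pool of $Y_n$ objects; an undirected edge joins $v_i$ and $v_j$ ($i\ne j$) iff $S_i\cap S_j\neq\emptyset$. The edge probability is $q_n=1-\binom{Y_n-X_n}{X_n}/\binom{Y_n}{X_n}$. *)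

(* Defs.v *)
From mathcomp Require Import all_boot.
From Stdlib Require Import Reals.

Set Implicit Arguments.
Unset Strict Implicit.
Unset Printing Implicit Defensive.

Definition key_q (X Y : nat) : R :=
  (1 - INR 'C(Y - X, X) / INR 'C(Y, X))%R.

(* The key sets of nodes v_1..v_m: an m-tuple (S_1,...,S_m) of subsets of the
   pool 'I_Y; a tuple is admissible iff every S_i has exactly X elements. *)
Definition key_tuple_ok (m X Y : nat) (S : {ffun 'I_m -> {set 'I_Y}}) : bool :=
  [forall i, #|S i| == X].

Definition union_size (m Y : nat) (S : {ffun 'I_m -> {set 'I_Y}}) : nat :=
  #|\bigcup_(i < m) S i|.

(* E[ exp(-c |S_1 u ... u S_m|) ] where S_1..S_m are independent, each uniform
   over the X-element subsets of a pool of Y objects: every admissible tuple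
   has probability (1 / C(Y,X))^m. *)
Definition exp_union_expectation (m X Y : nat) (c : R) : R :=
  \big[Rplus/0%R]_(S : {ffun 'I_m -> {set 'I_Y}} | key_tuple_ok X S)
     ((/ INR 'C(Y, X)) ^ m * exp (- c * INR (union_size S)))%R.

(* Main.v *)
From HB Require Import structures.
From Stdlib Require Import Reals Lra Lia.
Require Import Defs.
From mathcomp Require Import all_boot.
From mathcomp Require Import zify.
Set Warnings "-notation-overridden -redundant-canonical-projection".
Lemma cnt_eq (Y X : nat) (A : {set 'I_Y}) : #|A| <= X ->
  #|[set S : {set 'I_Y} | (#|S| == X) && (A \subset S)]| = 'C(Y - #|A|, X - #|A|).
Proof.
move=> hA.
have -> : [set S : {set 'I_Y} | (#|S| == X) && (A \subset S)] =
   (fun B : {set 'I_Y} => B :|: A) @: [set B : {set 'I_Y} | B \subset ~:A & #|B| == X - #|A|].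
  apply/setP=> S; rewrite inE; apply/andP/imsetP.
  - move=> [/eqP hS hAS]; exists (S :\: A).
      rewrite inE; apply/andP; split.
        by apply/subsetP=> x; rewrite !inE => /andP[].
      have := cardsUI (S :\: A) A; idtac.
      have eS : S :\: A :|: A = S.
        apply/setP=> x; rewrite !inE; case xA: (x \in A); rewrite ?orbT ?orbF ?andbT //=.
        by rewrite (subsetP hAS x xA).
      rewrite eS.
      have -> : (S :\: A) :&: A = set0.
        by apply/setP=> x; rewrite !inE; case: (x \in A); rewrite ?andbF.
      rewrite cards0 addn0 hS => ->; apply/eqP; lia.
    apply/setP=> x; rewrite !inE; case xA: (x \in A); rewrite ?orbT ?orbF ?andbT //=.
    by rewrite (subsetP hAS x xA).
  - move=> [B]; rewrite inE => /andP[hB /eqP hBc] ->; split; last exact: subsetUr.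
    have := cardsUI B A.
    have -> : B :&: A = set0.
      apply/setP=> x; rewrite !inE; apply/negbTE/negP=> /andP[xB xA].
      by move: (subsetP hB x xB); rewrite inE xA.
    rewrite cards0 addn0 hBc => ->; apply/eqP; lia.
rewrite card_in_imset.
  rewrite cards_draws cardsCs setCK card_ord //.
move=> B1 B2; rewrite !inE => /andP[h1 _] /andP[h2 _] e.
apply/setP=> x; have := congr1 (fun S : {set 'I_Y} => x \in S) e; rewrite /= !inE.
case xA: (x \in A); last by rewrite !orbF.
move=> _; have := subsetP h1 x; have := subsetP h2 x; rewrite !inE xA.
move=> H2 H1; case b1: (x \in B1); first by move: (H1 b1).
by case b2: (x \in B2) => //; move: (H2 b2).
Qed.

Definition cnt {Y : nat} (X : nat) (A : {set 'I_Y}) : nat :=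
  #|[set S : {set 'I_Y} | (#|S| == X) && (A \subset S)]|.

Lemma cnt_step (Y X : nat) (A : {set 'I_Y}) (b : 'I_Y) : X <= Y -> b \notin A ->
  cnt X (b |: A) * Y <= X * cnt X A.
Proof.
move=> hXY hb; rewrite /cnt.
have hc : #|b |: A| = #|A|.+1 by rewrite cardsU1 hb.
case: (ltnP #|A| X) => ha; last first.
  suff -> : #|[set S : {set 'I_Y} | (#|S| == X) && ((b |: A) \subset S)]| = 0 by [].
  apply/eqP; rewrite cards_eq0; apply/eqP/setP=> S; rewrite !inE.
  apply/negbTE/negP=> /andP[/eqP hS hsub]; have := subset_leq_card hsub.
  rewrite hc hS; lia.
rewrite cnt_eq ?hc // cnt_eq; last lia.
set n := Y - #|A|; set k := X - #|A|.+1.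
have hk : X - #|A| = k.+1 by rewrite /k; lia.
have hn : (Y - #|A|.+1) = n.-1 by rewrite /n; lia.
rewrite hk hn.
have e := mul_bin_diag n k.
have n0 : 0 < n by rewrite /n; lia.
rewrite -(leq_pmul2l n0).
have -> : n * ('C(n.-1, k) * Y) = (n * 'C(n.-1, k)) * Y by rewrite mulnA.
rewrite e.
have hX : X = #|A| + k.+1 by rewrite /k; lia.
have hY : Y = #|A| + n by rewrite /n; lia.
have hkn : k.+1 <= n by lia.
set c := 'C(n, k.+1). set a := #|A|.
have h1 : k.+1 * c * a <= n * c * a by rewrite leq_mul2r leq_mul2r hkn !orbT.
nia.
Qed.

Open Scope R_scope.
Lemma Rplus_assoc' : associative Rplus. Proof. move=> *; by rewrite Rplus_assoc. Qed.
Lemma Rmult_assoc' : associative Rmult. Proof. move=> *; by rewrite Rmult_assoc. Qed.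
HB.instance Definition _ := Monoid.isComLaw.Build R R0 Rplus Rplus_assoc' Rplus_comm Rplus_0_l.
HB.instance Definition _ := Monoid.isComLaw.Build R R1 Rmult Rmult_assoc' Rmult_comm Rmult_1_l.
HB.instance Definition _ := Monoid.isMulLaw.Build R R0 Rmult Rmult_0_l Rmult_0_r.
HB.instance Definition _ := Monoid.isAddLaw.Build R Rmult Rplus Rmult_plus_distr_r Rmult_plus_distr_l.

Lemma Rle_big (I : finType) (P : pred I) (F G : I -> R) :
  (forall i, P i -> F i <= G i) ->
  \big[Rplus/R0]_(i | P i) F i <= \big[Rplus/R0]_(i | P i) G i.
Proof.
move=> h; apply: (big_ind2 (fun x y => x <= y)) => //.
- exact: Rle_refl.
- move=> *; exact: Rplus_le_compat.
Qed.

Lemma big_R1 (I : finType) (P : pred I) :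
  \big[Rplus/R0]_(i | P i) R1 = INR #|[set i | P i]|.
Proof.
rewrite (eq_bigl (fun i => i \in [set i | P i])); last by move=> i; rewrite inE.
rewrite big_const; elim: #|_| => [|k IH] //=.
rewrite IH; case: k {IH} => [|k] /=; lra.
Qed.

Lemma card_split (Y : nat) (U S : {set 'I_Y}) (b : 'I_Y) : b \in U ->
  #|U :&: S| = (#|(U :\ b) :&: S| + (b \in S))%nat.
Proof.
move=> bU; case bS: (b \in S).
  have -> : U :&: S = b |: ((U :\ b) :&: S).
    apply/setP=> x; rewrite !inE; case: (eqVneq x b) => [->|] //=; by rewrite bU bS.
  by rewrite cardsU1 !inE eqxx /= addn1.
have -> : U :&: S = (U :\ b) :&: S.
  apply/setP=> x; rewrite !inE; case: (eqVneq x b) => [->|] //=; by rewrite bS andbF.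
by rewrite addn0.
Qed.

Lemma g_bound (Y X : nat) (c : R) : 0 <= c -> (X <= Y)%N -> (0 < Y)%N ->
  forall k (A U : {set 'I_Y}), #|U| = k -> A \subset ~: U ->
  \big[Rplus/R0]_(S : {set 'I_Y} | (#|S| == X) && (A \subset S)) exp (c * INR #|U :&: S|)
  <= INR (cnt X A) * (1 + (exp c - 1) * INR X / INR Y) ^ k.
Proof.
move=> hc hXY hY; elim=> [|k IH] A U hU hd.
  have -> : U = set0 by apply/eqP; rewrite -cards_eq0 hU.
  under eq_bigr do rewrite set0I cards0 Rmult_0_r exp_0.
  rewrite big_R1 /cnt /=; lra.
have : (0 < #|U|)%N by rewrite hU.
rewrite card_gt0 => /set0Pn [b bU].
have hbA : b \notin A.
  apply/negP=> bA; have := subsetP hd b bA; by rewrite inE bU.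
have hU' : #|U :\ b| = k by move: hU; rewrite (cardsD1 b U) bU; lia.
have E : \big[Rplus/R0]_(S : {set 'I_Y} | (#|S| == X) && (A \subset S)) exp (c * INR #|U :&: S|)
   = \big[Rplus/R0]_(S : {set 'I_Y} | (#|S| == X) && (A \subset S)) exp (c * INR #|(U :\ b) :&: S|)
   + (exp c - 1) * \big[Rplus/R0]_(S : {set 'I_Y} | (#|S| == X) && ((b |: A) \subset S))
         exp (c * INR #|(U :\ b) :&: S|).
  rewrite big_distrr /=.
  rewrite [X in _ = _ + X](eq_bigl (fun S : {set 'I_Y} => ((#|S| == X) && (A \subset S)) && (b \in S))); last first.
    by move=> S; rewrite subUset sub1set; case: (b \in S); case: (A \subset S); rewrite ?andbT ?andbF.
  rewrite [X in _ = _ + X]big_mkcondr -big_split /=; apply: eq_bigr => S _.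
  rewrite (@card_split _ U S b bU) plus_INR Rmult_plus_distr_l exp_plus.
  case: (b \in S) => /=; rewrite ?Rmult_1_r ?Rmult_0_r ?exp_0; set e := exp (c * _); set d := exp c; ring.
rewrite E.
have hsub : ~: U \subset ~: (U :\ b) by rewrite setCS subD1set.
have I1 := IH A (U :\ b) hU' (subset_trans hd hsub).
have hd2 : (b |: A) \subset ~: (U :\ b).
  apply/subsetP=> x; rewrite !inE; case: (eqVneq x b) => [->|] //= _ xA.
  have := subsetP hd x xA; rewrite inE; exact.
have I2 := IH (b |: A) (U :\ b) hU' hd2.
have hcs := @cnt_step _ _ _ _ hXY hbA.
have hcs' : INR (cnt X (b |: A)) * INR Y <= INR X * INR (cnt X A).
  rewrite -!mult_INR; apply: le_INR; exact/leP.
have hY' : 0 < INR Y by apply: lt_0_INR; exact/ltP.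
have hcb : INR (cnt X (b |: A)) <= INR X * INR (cnt X A) / INR Y.
  apply: (Rmult_le_reg_r (INR Y)) => //; rewrite /Rdiv Rmult_assoc Rinv_l ?Rmult_1_r //; lra.
set r := 1 + (exp c - 1) * INR X / INR Y.
have hd0 : 0 <= exp c - 1 by have := exp_ineq1_le c; lra.
have hr : 0 <= r ^ k.
  apply: pow_le; rewrite /r; have : 0 <= (exp c - 1) * INR X / INR Y.
    apply: Rmult_le_pos; [apply: Rmult_le_pos => //; exact: pos_INR | left; exact: Rinv_0_lt_compat].
  lra.
have J : (exp c - 1) * \big[Rplus/R0]_(S : {set 'I_Y} | (#|S| == X) && ((b |: A) \subset S))
         exp (c * INR #|(U :\ b) :&: S|) <= (exp c - 1) * (INR X * INR (cnt X A) / INR Y * r ^ k).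
  apply: Rmult_le_compat_l => //; apply: Rle_trans I2 _.
  apply: Rmult_le_compat_r => //.
apply: Rle_trans (Rplus_le_compat _ _ _ _ I1 J) _.
rewrite /= /r; right; field; lra.
Qed.

Definition rr (X Y : nat) (c : R) := 1 + (exp c - 1) * INR X / INR Y.

Lemma rr_ge1 X Y c : 0 <= c -> (0 < Y)%N -> 1 <= rr X Y c.
Proof.
move=> hc hY; rewrite /rr.
have hd0 : 0 <= exp c - 1 by have := exp_ineq1_le c; lra.
have hY' : 0 < INR Y by apply: lt_0_INR; exact/ltP.
have : 0 <= (exp c - 1) * INR X / INR Y.
  apply: Rmult_le_pos; [apply: Rmult_le_pos => //; exact: pos_INR | left; exact: Rinv_0_lt_compat].
lra.
Qed.

Lemma step1 (Y X : nat) (c : R) (U0 : {set 'I_Y}) : 0 <= c -> (X <= Y)%N -> (0 < Y)%N ->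
  \big[Rplus/R0]_(S : {set 'I_Y} | #|S| == X) exp (- c * INR #|U0 :|: S|)
  <= exp (- c * (INR #|U0| + INR X)) * (INR 'C(Y, X) * rr X Y c ^ #|U0|).
Proof.
move=> hc hXY hY.
have E : forall S : {set 'I_Y}, #|S| == X ->
   exp (- c * INR #|U0 :|: S|) = exp (- c * (INR #|U0| + INR X)) * exp (c * INR #|U0 :&: S|).
  move=> S /eqP hS; rewrite -exp_plus; f_equal.
  have h := cardsUI U0 S; rewrite hS in h.
  have h' : (INR #|U0 :|: S| + INR #|U0 :&: S| = INR #|U0| + INR X) by rewrite -!plus_INR; f_equal; move: h; lia.
  nra.
rewrite (eq_bigr _ E) -big_distrr /=.
apply: Rmult_le_compat_l; first by left; apply: exp_pos.
have := @g_bound Y X c hc hXY hY #|U0| set0 U0 erefl (sub0set _).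
move=> H; eapply Rle_trans; [eapply Rle_trans; [|exact H]|].
  right; apply: eq_bigl => S; by rewrite sub0set andbT.
rewrite /cnt cnt_eq ?cards0 // !subn0; rewrite /rr; right; f_equal.
Qed.

Definition cons_ff {T : finType} {m : nat} (x : T) (f : {ffun 'I_m -> T}) : {ffun 'I_m.+1 -> T} :=
  [ffun i => if unlift ord0 i is Some j then f j else x].

Definition uncons_ff {T : finType} {m : nat} (F : {ffun 'I_m.+1 -> T}) : T * {ffun 'I_m -> T} :=
  (F ord0, [ffun j => F (lift ord0 j)]).

Lemma cons_ffK (T : finType) m : cancel (fun p : T * {ffun 'I_m -> T} => cons_ff p.1 p.2) (@uncons_ff T m).
Proof.
move=> [x f]; rewrite /uncons_ff /cons_ff /= ffunE unlift_none; congr pair.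
by apply/ffunP=> j; rewrite !ffunE liftK.
Qed.

Lemma uncons_ffK (T : finType) m : cancel (@uncons_ff T m) (fun p : T * {ffun 'I_m -> T} => cons_ff p.1 p.2).
Proof.
move=> F; apply/ffunP=> i; rewrite /uncons_ff /cons_ff /= ffunE.
case: unliftP => [j ->|->] //; by rewrite ffunE.
Qed.

Lemma ok_cons (Y X m : nat) (x : {set 'I_Y}) (f : {ffun 'I_m -> {set 'I_Y}}) :
  key_tuple_ok X (cons_ff x f) = (#|x| == X) && key_tuple_ok X f.
Proof.
rewrite /key_tuple_ok; apply/forallP/andP => [H | [hx /forallP H] i].
  split; first by have := H ord0; rewrite ffunE unlift_none.
  by apply/forallP=> j; have := H (lift ord0 j); rewrite ffunE liftK.
by rewrite ffunE; case: (unlift ord0 i) => [j|] //.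
Qed.

Lemma union_cons (Y m : nat) (x : {set 'I_Y}) (f : {ffun 'I_m -> {set 'I_Y}}) :
  \bigcup_(i < m.+1) cons_ff x f i = x :|: \bigcup_(i < m) f i.
Proof.
rewrite big_ord_recl ffunE unlift_none; congr setU.
by apply: eq_bigr => j _; rewrite ffunE liftK.
Qed.

Lemma big_Rconst (I : finType) (P : pred I) (a : R) :
  \big[Rplus/R0]_(i | P i) a = INR #|[set i | P i]| * a.
Proof.
rewrite (eq_bigl (fun i => i \in [set i | P i])); last by move=> i; rewrite inE.
rewrite big_const; elim: #|_| => [|k IH] /=; first ring.
rewrite IH; case: k {IH} => [|k] /=; ring.
Qed.

Lemma tuple_bound (Y X : nat) (c : R) : 0 <= c -> (X <= Y)%N -> (0 < Y)%N ->
  forall m (U0 : {set 'I_Y}),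
  \big[Rplus/R0]_(S : {ffun 'I_m -> {set 'I_Y}} | key_tuple_ok X S)
      exp (- c * INR #|U0 :|: \bigcup_(i < m) S i|)
  <= INR 'C(Y, X) ^ m * exp (- c * (INR #|U0| + INR m * INR X))
       * rr X Y c ^ (m * #|U0| + m * m * X).
Proof.
move=> hc hXY hY; elim=> [|m IH] U0.
  under eq_bigr do rewrite big_ord0 setU0.
  rewrite big_Rconst.
  have -> : [set S : {ffun 'I_0 -> {set 'I_Y}} | key_tuple_ok X S] = setT.
    by apply/setP=> S; rewrite !inE; apply/forallP => -[].
  rewrite cardsT card_ffun card_ord expn0 /=; right; rewrite Rmult_0_l Rplus_0_r; ring.
have bij : {on [pred F : {ffun 'I_m.+1 -> {set 'I_Y}} | key_tuple_ok X F],
    bijective (fun p : {set 'I_Y} * {ffun 'I_m -> {set 'I_Y}} => cons_ff p.1 p.2)}.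
  apply: onW_bij; exact: (Bijective (@cons_ffK _ m) (@uncons_ffK _ m)).
have E : \big[Rplus/R0]_(S : {ffun 'I_m.+1 -> {set 'I_Y}} | key_tuple_ok X S)
      exp (- c * INR #|U0 :|: \bigcup_(i < m.+1) S i|)
   = \big[Rplus/R0]_(x : {set 'I_Y} | #|x| == X)
       \big[Rplus/R0]_(f : {ffun 'I_m -> {set 'I_Y}} | key_tuple_ok X f)
          exp (- c * INR #|(U0 :|: x) :|: \bigcup_(i < m) f i|).
  rewrite pair_big /= (reindex _ bij) /=.
  apply: eq_big => [[x f]|[x f] _] /=; first by rewrite ok_cons.
  by rewrite union_cons setUA.
rewrite E.
set N := INR 'C(Y, X).
set r := rr X Y c.
have hr := @rr_ge1 X Y c hc hY; rewrite -/r in hr.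
set K := N ^ m * exp (- c * (INR m * INR X)) * r ^ (m * (#|U0| + X) + m * m * X).
have T : forall x : {set 'I_Y}, #|x| == X ->
   \big[Rplus/R0]_(f : {ffun 'I_m -> {set 'I_Y}} | key_tuple_ok X f)
          exp (- c * INR #|(U0 :|: x) :|: \bigcup_(i < m) f i|)
   <= K * exp (- c * INR #|U0 :|: x|).
  move=> x /eqP hx; apply: Rle_trans (IH (U0 :|: x)) _.
  have hcard : (#|U0 :|: x| <= #|U0| + X)%N by rewrite -hx; exact: leq_card_setU.
  rewrite /K; rewrite Rmult_plus_distr_l exp_plus.
  have hN : 0 <= N ^ m by apply: pow_le; exact: pos_INR.
  have he1 := exp_pos (- c * INR #|U0 :|: x|).
  have he2 := exp_pos (- c * (INR m * INR X)).
  have hp : r ^ (m * #|U0 :|: x| + m * m * X) <= r ^ (m * (#|U0| + X) + m * m * X).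
    apply: Rle_pow => //; apply/leP; rewrite leq_add2r leq_mul2l hcard orbT //.
  have hp0 : 0 <= r ^ (m * #|U0 :|: x| + m * m * X) by apply: pow_le; lra.
  rewrite -/N -/r.
  set a := exp (- c * INR #|U0 :|: x|); set b := exp (- c * (INR m * INR X)).
  set p := r ^ (m * #|U0 :|: x| + m * m * X); set q := r ^ (m * (#|U0| + X) + m * m * X).
  have -> : N ^ m * (a * b) * p = (N ^ m * a * b) * p by ring.
  have -> : N ^ m * b * q * a = (N ^ m * a * b) * q by ring.
  apply: Rmult_le_compat_l => //; apply: Rmult_le_pos; [apply: Rmult_le_pos; [exact: hN|left; exact: he1]|left; exact: he2].
eapply Rle_trans; [apply: Rle_big; exact: T|].
rewrite -big_distrr /=.
have S1 := @step1 Y X c U0 hc hXY hY.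
have hK : 0 <= K.
  rewrite /K; apply: Rmult_le_pos; [apply: Rmult_le_pos; [apply: pow_le; exact: pos_INR|left; exact: exp_pos]|apply: pow_le; lra].
apply: Rle_trans (Rmult_le_compat_l _ _ _ hK S1) _.
rewrite /K -/r -/N.
have hp : r ^ (m * (#|U0| + X) + m * m * X) * r ^ #|U0| <= r ^ (m.+1 * #|U0| + m.+1 * m.+1 * X).
  rewrite -pow_add; apply: Rle_pow => //; apply/leP; nia.
have hN : 0 <= N ^ m * N by apply: Rmult_le_pos; [apply: pow_le|]; exact: pos_INR.
have ee : exp (- c * (INR m * INR X)) * exp (- c * (INR #|U0| + INR X)) = exp (- c * (INR #|U0| + INR m.+1 * INR X)).
  rewrite -exp_plus; f_equal; rewrite S_INR; ring.
have he := exp_pos (- c * (INR #|U0| + INR m.+1 * INR X)).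
have hr0 : 0 <= r ^ (m * (#|U0| + X) + m * m * X) * r ^ #|U0|.
  apply: Rmult_le_pos; apply: pow_le; lra.
rewrite /=.
rewrite -ee.
set e1 := exp (- c * (INR m * INR X)); set e2 := exp (- c * (INR #|U0| + INR X)).
set p1 := r ^ (m * (#|U0| + X) + m * m * X); set p2 := r ^ #|U0|.
set p3 := r ^ (m.+1 * #|U0| + m.+1 * m.+1 * X).
have -> : N ^ m * e1 * p1 * (e2 * (N * p2)) = (N ^ m * N) * (e1 * e2) * (p1 * p2) by ring.
have -> : N * N ^ m * (e1 * e2) * p3 = (N ^ m * N) * (e1 * e2) * p3 by ring.
apply: Rmult_le_compat_l => //; apply: Rmult_le_pos => //; rewrite ee; lra.
Qed.

Lemma ffact_ratio (a b : nat) : (a <= b)%N -> forall k,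
  (a ^_ k * b ^ k <= b ^_ k * a ^ k)%N.
Proof.
move=> hab; elim=> [|k IH] //.
rewrite !ffactnSr !expnSr.
have h2 : ((a - k) * b <= (b - k) * a)%N.
  case: (leqP k a) => hk; last by rewrite (_ : a - k = 0)%N ?mul0n //; lia.
  nia.
have := leq_mul IH h2.
by rewrite mulnACA [(b ^_ k * (b - k) * _)%N]mulnACA.
Qed.

Lemma binom_ratio (X Y : nat) : (X <= Y)%N ->
  ('C(Y - X, X) * Y ^ X <= 'C(Y, X) * (Y - X) ^ X)%N.
Proof.
move=> hXY.
have f0 : (0 < X`!)%N := fact_gt0 X.
rewrite -(leq_pmul2r f0) mulnAC [('C(Y, X) * _ * _)%N]mulnAC !bin_ffact.
apply: ffact_ratio; exact: leq_subr.
Qed.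

Lemma exp_pow_le (b : R) (k : nat) : 0 <= 1 + b -> (1 + b) ^ k <= exp (INR k * b).
Proof.
move=> hb; elim: k => [|k IH] /=; first by rewrite Rmult_0_l exp_0; lra.
have -> : INR k.+1 * b = b + INR k * b by rewrite S_INR; ring.
rewrite exp_plus; apply: Rmult_le_compat => //.
- apply: pow_le => //.
- exact: exp_ineq1_le.
Qed.

Lemma INR_expn (a k : nat) : INR (a ^ k)%N = INR a ^ k.
Proof. elim: k => [|k IH] //=; by rewrite expnS mult_INR IH. Qed.

Lemma key_q_lower (X Y : nat) : (0 < X)%N -> (X <= Y)%N ->
  1 - exp (- (INR X * INR X / INR Y)) <= key_q X Y.
Proof.
move=> hX hXY.
have hY : (0 < Y)%N by apply: leq_trans hXY.
have hY' : 0 < INR Y by apply: lt_0_INR; exact/ltP.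
have hC : 0 < INR 'C(Y, X) by apply: lt_0_INR; apply/ltP; rewrite bin_gt0.
rewrite /key_q.
suff : INR 'C(Y - X, X) / INR 'C(Y, X) <= exp (- (INR X * INR X / INR Y)) by lra.
have hr := @binom_ratio X Y hXY.
have hr' : INR 'C(Y - X, X) * INR Y ^ X <= INR 'C(Y, X) * INR (Y - X) ^ X.
  rewrite -!INR_expn -!mult_INR; apply: le_INR; exact/leP.
have hYX : INR (Y - X) = INR Y - INR X by rewrite minus_INR //; exact/leP.
have hp : 0 < INR Y ^ X by apply: pow_lt.
have step : INR 'C(Y - X, X) / INR 'C(Y, X) <= (1 + (- (INR X / INR Y))) ^ X.
  have -> : (1 + - (INR X / INR Y)) ^ X = INR (Y - X) ^ X / INR Y ^ X.
    have -> : 1 + - (INR X / INR Y) = (INR Y - INR X) * / INR Y by field; lra.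
    by rewrite hYX Rpow_mult_distr pow_inv.
  apply: (Rmult_le_reg_r (INR 'C(Y, X) * INR Y ^ X)); first by apply: Rmult_lt_0_compat.
  have -> : INR 'C(Y - X, X) / INR 'C(Y, X) * (INR 'C(Y, X) * INR Y ^ X) = INR 'C(Y - X, X) * INR Y ^ X.
    field; lra.
  have -> : INR (Y - X) ^ X / INR Y ^ X * (INR 'C(Y, X) * INR Y ^ X) = INR 'C(Y, X) * INR (Y - X) ^ X.
    field; lra.
  exact: hr'.
apply: Rle_trans step _.
have hXY' : INR X <= INR Y by apply: le_INR; exact/leP.
have : 0 <= 1 + - (INR X / INR Y).
  have : INR X / INR Y <= 1.
    apply: (Rmult_le_reg_r (INR Y)) => //; rewrite /Rdiv Rmult_assoc Rinv_l; lra.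
  lra.
move=> h0; eapply Rle_trans; [exact: (@exp_pow_le _ X h0)|].
right; f_equal; field; lra.
Qed.

Lemma E_bound (m X Y : nat) (c : R) : 0 <= c -> (X <= Y)%N -> (0 < Y)%N ->
  exp_union_expectation m X Y c <= exp (- c * (INR m * INR X)) * rr X Y c ^ (m * m * X).
Proof.
move=> hc hXY hY.
rewrite /exp_union_expectation -big_distrr /=.
have hC : 0 < INR 'C(Y, X) by apply: lt_0_INR; apply/ltP; rewrite bin_gt0.
have := @tuple_bound Y X c hc hXY hY m set0.
rewrite cards0 muln0 add0n Rplus_0_l.
move=> H.
have eU : forall S : {ffun 'I_m -> {set 'I_Y}},
   exp (- c * INR (union_size S)) = exp (- c * INR #|set0 :|: \bigcup_(i < m) S i|).
  by move=> S; rewrite set0U.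
rewrite (eq_bigr _ (fun S _ => eU S)).
have hi : 0 <= (/ INR 'C(Y, X)) ^ m by apply: pow_le; left; apply: Rinv_0_lt_compat.
apply: Rle_trans (Rmult_le_compat_l _ _ _ hi H) _.
right; rewrite -!Rmult_assoc -Rpow_mult_distr Rinv_l; last lra.
rewrite pow1 Rmult_1_l; reflexivity.
Qed.

Lemma exp_sq_lower (L : R) : 0 <= L -> L * L / 4 <= exp L.
Proof.
move=> hL.
have -> : exp L = exp (L / 2) * exp (L / 2) by rewrite -exp_plus; f_equal; field.
have h := exp_ineq1_le (L / 2).
have : 0 <= 1 + L / 2 by lra.
nra.
Qed.

Lemma exp_le_mono (a b : R) : a <= b -> exp a <= exp b.
Proof. case=> [h|->]; [left; exact: exp_increasing|right; reflexivity]. Qed.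

Lemma analytic (m x y : nat) (n L q eps : R) :
  (1 <= m)%N -> (2 <= x)%N -> (x <= y)%N -> 0 < eps ->
  exp L = n -> 12 <= L -> 192 * INR m * INR m / ln (1 + eps) <= L ->
  L / n / 2 < q -> q < 3 * (L / n) / 2 ->
  1 - exp (- (INR x * INR x / INR y)) <= q ->
  exp (- (n * q / INR x) * (INR m * INR x)) * rr x y (n * q / INR x) ^ (m * m * x)
  <= exp (- (INR m * n * q)) * (1 + eps).
Proof.
move=> hm hx hxy heps hLn hL12 hLe hq1 hq2 hql.
have hn : 0 < n by rewrite -hLn; apply: exp_pos.
have hx' : 2 <= INR x by have := le_INR 2 x (elimT leP hx); rewrite /=; lra.
have hy' : INR x <= INR y by apply: le_INR; exact/leP.
have hm' : 1 <= INR m by have := le_INR 1 m (elimT leP hm); rewrite /=; lra.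
have hln : 0 < ln (1 + eps).
  rewrite -ln_1; apply: ln_increasing; lra.
have hu : L / n <= 4 / L.
  have hL0 : 0 <= L by lra.
  have := @exp_sq_lower L hL0; rewrite hLn => h.
  apply: (Rmult_le_reg_r (n * L)); first nra.
  have -> : L / n * (n * L) = L * L by field; lra.
  have -> : 4 / L * (n * L) = 4 * n by field; lra.
  lra.
have hu0 : 0 < L / n by apply: Rdiv_lt_0_compat; lra.
have hq0 : 0 < q by lra.
have hqh : q <= 1 / 2.
  have : 4 / L <= 1 / 3.
    apply: (Rmult_le_reg_r L); first lra.
    have -> : 4 / L * L = 4 by field; lra.
    lra.
  lra.
set c := n * q / INR x.
have hc0 : 0 <= c by rewrite /c; apply: Rmult_le_pos; [nra|left; apply: Rinv_0_lt_compat; lra].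
have hc : c <= 3 * L / 4.
  rewrite /c; apply: (Rmult_le_reg_r (INR x)); first lra.
  have -> : n * q / INR x * INR x = n * q by field; lra.
  have : n * q < 3 * L / 2.
    have -> : 3 * L / 2 = n * (3 * (L / n) / 2) by field; lra.
    apply: Rmult_lt_compat_l => //.
  nra.
have ec : exp (- c * (INR m * INR x)) = exp (- (INR m * n * q)).
  f_equal; rewrite /c; field; lra.
rewrite ec.
apply: Rmult_le_compat_l; first by left; apply: exp_pos.
set t := INR x * INR x / INR y.
have hy0 : 0 < INR y by lra.
have ht0 : 0 <= t by rewrite /t; apply: Rmult_le_pos; [nra|left; apply: Rinv_0_lt_compat; lra].
have ht : t <= 2 * q.
  set w := exp (- t).
  have hw : w * (1 + t) <= 1.
    have e1 : w * exp t = 1 by rewrite /w -exp_plus Rplus_opp_l exp_0.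
    have := exp_ineq1_le t; have := exp_pos (- t); rewrite -/w; nra.
  have hw0 : 0 < w by apply: exp_pos.
  have h1 : (1 - w) * (1 + t) <= q * (1 + t).
    apply: Rmult_le_compat_r; first lra.
    move: hql; rewrite -/t -/w; lra.
  have : t <= q * (1 + t) by lra.
  nra.
set r := rr x y c.
have hb : 0 <= 1 + (r - 1).
  have hy0' : (0 < y)%N by apply: leq_trans hxy; apply: ltnW.
  have := @rr_ge1 x y c hc0 hy0'.
  rewrite /r; lra.
have hr := @exp_pow_le (r - 1) (m * m * x)%N hb.
rewrite (_ : 1 + (r - 1) = r) in hr; last ring.
apply: Rle_trans hr _.
have -> : 1 + eps = exp (ln (1 + eps)) by rewrite exp_ln; lra.
apply: exp_le_mono.
have er : r - 1 = (exp c - 1) * INR x / INR y by rewrite /r /rr; ring.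
rewrite er !mult_INR.
have hec : 0 <= exp c - 1 by have := exp_ineq1_le c; lra.
have hA : INR m * INR m * INR x * ((exp c - 1) * INR x / INR y)
          = INR m * INR m * (t * (exp c - 1)) by rewrite /t; field; lra.
rewrite hA.
have hm2 : 0 <= INR m * INR m by nra.
have h1 : t * (exp c - 1) <= 2 * q * exp c.
  have : exp c - 1 <= exp c by lra.
  have : 0 <= 2 * q by lra.
  nra.
have e4 : n = exp (3 * L / 4) * exp (L / 4) by rewrite -hLn -exp_plus; f_equal; field.
have hL4 : L * L / 64 <= exp (L / 4).
  have hL8 : 0 <= L / 4 by lra.
  have := @exp_sq_lower (L / 4) hL8; lra.
have hqe : q * exp c <= 96 / L.
  have hce : exp c <= exp (3 * L / 4) := @exp_le_mono _ _ hc.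
  have hq3 : q <= 3 * L / 2 / n by move: hq2; rewrite /Rdiv; lra.
  have hE := exp_pos (3 * L / 4).
  have hF := exp_pos (L / 4).
  have : q * exp c <= 3 * L / 2 / n * exp (3 * L / 4).
    apply: Rmult_le_compat => //; [lra|left; exact: exp_pos].
  have -> : 3 * L / 2 / n * exp (3 * L / 4) = 3 * L / 2 / exp (L / 4).
    rewrite e4; field; lra.
  move=> H; apply: Rle_trans H _.
  apply: (Rmult_le_reg_r (exp (L / 4) * L)); first nra.
  have -> : 3 * L / 2 / exp (L / 4) * (exp (L / 4) * L) = 3 * L * L / 2 by field; lra.
  have -> : 96 / L * (exp (L / 4) * L) = 96 * exp (L / 4) by field; lra.
  lra.
have hfin : INR m * INR m * (2 * (96 / L)) <= ln (1 + eps).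
  have : 192 * INR m * INR m <= L * ln (1 + eps).
    apply: (Rmult_le_reg_r (/ ln (1 + eps))); first by apply: Rinv_0_lt_compat.
    have -> : L * ln (1 + eps) * / ln (1 + eps) = L by field; lra.
    exact: hLe.
  move=> H.
  apply: (Rmult_le_reg_r L); first lra.
  have -> : INR m * INR m * (2 * (96 / L)) * L = 192 * INR m * INR m by field; lra.
  lra.
apply: Rle_trans hfin.
apply: Rmult_le_compat_l => //.
lra.
Qed.

Delimit Scope R_scope with R.

Theorem mainTheorem7 (m : nat) (X Y : nat -> nat)
  (Hm : (1 <= m)%coq_nat)
  (HXpos : forall n, (1 <= X n)%coq_nat)
  (HXY : forall n, (X n <= Y n)%coq_nat)
  (HX2 : exists N, forall n, (N <= n)%coq_nat -> (2 <= X n)%coq_nat)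
  (Hq : Un_cv (fun n => (key_q (X n) (Y n) / (ln (INR n) / INR n))%R) 1%R) :
  forall eps : R, (0 < eps)%R ->
  exists N : nat, forall n : nat, (N <= n)%coq_nat ->
    (exp_union_expectation m (X n) (Y n)
        (INR n * key_q (X n) (Y n) / INR (X n))
     <= exp (- (INR m * INR n * key_q (X n) (Y n))) * (1 + eps))%R.
Proof.
move=> eps heps.
case: HX2 => N2 HN2.
have hln : 0 < ln (1 + eps) by rewrite -ln_1; apply: ln_increasing; lra.
set L0 := Rmax 12 (192 * INR m * INR m / ln (1 + eps)).
have [N3 HN3] := INR_archimed 1 (exp L0) Rlt_0_1.
have [N1 HN1] := Hq (1 / 2) ltac:(lra).
exists (N1 + N2 + N3)%coq_nat => n hn.
have hn1 : (n >= N1)%coq_nat by lia.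
have hn2 : (N2 <= n)%coq_nat by lia.
have hn3 : (N3 <= n)%coq_nat by lia.
have hexp : exp L0 < INR n.
  have := le_INR _ _ hn3; lra.
have hn0 : 0 < INR n by have := exp_pos L0; lra.
set L := ln (INR n).
have hL : L0 < L by rewrite -(ln_exp L0); apply: ln_increasing => //; apply: exp_pos.
have hLn : exp L = INR n by rewrite /L exp_ln.
have hL12 : 12 <= L by have := Rmax_l 12 (192 * INR m * INR m / ln (1 + eps)); rewrite -/L0; lra.
have hLe : 192 * INR m * INR m / ln (1 + eps) <= L.
  have := Rmax_r 12 (192 * INR m * INR m / ln (1 + eps)); rewrite -/L0; lra.
set q := key_q (X n) (Y n).
have hu0 : 0 < L / INR n by apply: Rdiv_lt_0_compat; lra.
have hd := HN1 n hn1; rewrite /R_dist /= -/L -/q in hd.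
have [hd1 hd2] := Rabs_def2 _ _ hd.
have eq : q = q / (L / INR n) * (L / INR n) by field; split; lra.
have hq1 : L / INR n / 2 < q.
  rewrite eq; have : 1 / 2 < q / (L / INR n) by lra.
  move=> h; have := Rmult_lt_compat_r _ _ _ hu0 h; lra.
have hq2 : q < 3 * (L / INR n) / 2.
  rewrite {1}eq; have : q / (L / INR n) < 3 / 2 by lra.
  move=> h; have := Rmult_lt_compat_r _ _ _ hu0 h; lra.
have hx : (2 <= X n)%N by apply/leP; exact: HN2.
have hx1 : (0 < X n)%N by apply/leP; exact: HXpos.
have hxy : (X n <= Y n)%N by apply/leP; exact: HXY.
have hy : (0 < Y n)%N by apply: leq_trans hxy.
have hm : (1 <= m)%N by apply/leP.
have hql := @key_q_lower (X n) (Y n) hx1 hxy; rewrite -/q in hql.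
have hc0 : 0 <= INR n * q / INR (X n).
  have : 0 < INR (X n) by apply: lt_0_INR; exact/ltP.
  move=> h; apply: Rmult_le_pos; [nra|left; exact: Rinv_0_lt_compat].
apply: Rle_trans (@E_bound m (X n) (Y n) _ hc0 hxy hy) _.
exact: (@analytic m (X n) (Y n) (INR n) L q eps hm hx hxy heps hLn hL12 hLe hq1 hq2 hql).
Qed.
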